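(* Let $l\ge2$ be an integer and $\varepsilon>0$. Then, as $n\to\infty$, $$\sum_{1\le i\le n}\ \sum_{\substack{d_1,d_2\ge1,\ d_1d_2\le i\\ d_1\mid i,\ d_2\mid i+1\\ \gcd(d_1,d_2)=1}}\frac{\mu(d_1)\mu(d_2)}{(d_1d_2)^{l-1}}=n\prod_p\Big(1-\frac{2}{p^l}\Big)+O_{l,\varepsilon}(n^{\varepsilon}),$$ where $\mu$ is the Möbius function and $p$ runs over all primes. *)

(* Defs.v *)
From HB Require Import structures.
From mathcomp Require Import all_boot all_order all_algebra.
From mathcomp Require Import all_classical all_reals all_analysis.
Set Implicit Arguments. Unset Strict Implicit. Unset Printing Implicit Defensive.
Import Order.TTheory GRing.Theory Num.Theory.
Local Open Scope ring_scope.

(* Moebius function: mu 0 = 0 (never used), mu n = (-1)^(#primes of n) if n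
   is squarefree, 0 otherwise. *)
Definition moebius (n : nat) : int :=
  if (0 < n)%N && all (fun p => logn p n == 1%N) (primes n)
  then (-1) ^+ size (primes n) else 0.

Definition S29 (R : realType) (l n : nat) : R :=
  \sum_(1 <= i < n.+1)
    \sum_(1 <= d1 < i.+1 | (d1 %| i)%N)
      \sum_(1 <= d2 < i.+2 | [&& (d2 %| i.+1)%N, coprime d1 d2 & (d1 * d2 <= i)%N])
        ((moebius d1 * moebius d2)%:~R / ((d1 * d2)%:R ^+ (l - 1))).

Definition euler_partial (R : realType) (l N : nat) : R :=
  \prod_(p < N | prime p) (1 - 2 / (p%:R ^+ l)).

(* Main.v *)
Require Import Defs.
From HB Require Import structures.
From mathcomp Require Import all_boot all_order all_algebra.
From mathcomp Require Import all_classical all_reals all_analysis.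
Import Order.TTheory GRing.Theory Num.Theory.
Import numFieldNormedType.Exports.
Local Open Scope ring_scope.
Local Open Scope classical_set_scope.
Lemma moeb1 : moebius 1 = 1.
Proof. by rewrite /moebius. Qed.

Lemma moebM p d : prime p -> ~~ (p %| d)%N -> (0 < d)%N ->
  moebius (p * d) = - moebius d.
Proof.
move=> pp pd d0.
have p0 : (0 < p)%N by exact: prime_gt0.
have pnd : p \notin primes d by rewrite mem_primes pp d0.
have Pe : perm_eq (primes (p * d)) (p :: primes d).
  apply: uniq_perm; first exact: primes_uniq.
    by rewrite /= pnd primes_uniq.
  by move=> q; rewrite primesM // in_cons primes_prime // mem_seq1.
have hall : all (fun q => logn q (p * d) == 1%N) (primes (p * d)) =
            all (fun q => logn q d == 1%N) (primes d).
  rewrite (perm_all _ Pe) /= lognM // logn_prime // eqxx.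
  have -> : logn p d = 0%N by apply/eqP; rewrite -leqn0 leqNgt logn_gt0.
  rewrite /=; apply: eq_in_all => q qd.
  rewrite lognM // logn_prime //.
  by case: (q =P p) => [qp|]; [move: qd; rewrite qp (negbTE pnd)|].
rewrite /moebius muln_gt0 p0 d0 hall /=.
rewrite (perm_size Pe) /= exprS.
by case: ifP => _; rewrite ?mulN1r ?oppr0.
Qed.

Lemma moeb_sq p d : prime p -> (p * p %| d)%N -> moebius d = 0.
Proof.
move=> pp pd; rewrite /moebius.
have [d0|] := posnP d; first by rewrite d0.
move=> d0; rewrite ifF //; apply/negbTE; rewrite negb_and; apply/orP; right.
have pin : p \in primes d.
  by rewrite mem_primes pp d0 (dvdn_trans (dvdn_mulr _ (dvdnn p)) pd).
have : (2 <= logn p d)%N by rewrite -pfactor_dvdn // expnS expn1.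
case: allP => // /(_ _ pin) /eqP ->.
by [].
Qed.

Lemma moeb_cases d : moebius d = 0 \/ moebius d = 1 \/ moebius d = -1.
Proof.
rewrite /moebius; case: ifP => _; last by left.
by rewrite -signr_odd; case: odd; [right; right | right; left].
Qed.

Lemma moeb_norm (R : numDomainType) d : `|(moebius d)%:~R : R| <= 1.
Proof.
by case: (moeb_cases d) => [->|[->|->]]; rewrite ?normr0 ?normrN ?normr1.
Qed.

Definition Dl (ps : seq nat) : seq nat :=
  foldr (fun p s => s ++ map (muln p) s) [:: 1%N] ps.

Lemma Dl_cons p ps : Dl (p :: ps) = Dl ps ++ map (muln p) (Dl ps).
Proof. by []. Qed.

Lemma Dl_pos ps x : all prime ps -> x \in Dl ps -> (0 < x)%N.
Proof.
elim: ps x => [|p ps IH] x /=; first by rewrite mem_seq1 => _ /eqP ->.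
move=> /andP[pp aps]; rewrite mem_cat => /orP[/IH -> //|/mapP[y yD ->]].
by rewrite muln_gt0 prime_gt0 // IH.
Qed.

Lemma Dl_ndvd ps p x : prime p -> p \notin ps -> all prime ps ->
  x \in Dl ps -> ~~ (p %| x)%N.
Proof.
move=> pp; elim: ps x => [|q ps IH] x /=.
  by rewrite mem_seq1 => _ _ /eqP ->; rewrite dvdn1; case: eqP pp => // ->.
rewrite in_cons negb_or => /andP[pq pps] /andP[qp aps].
rewrite mem_cat => /orP[/IH -> //|/mapP[y yD ->]].
rewrite Euclid_dvdM // negb_or (IH y) // andbT dvdn_prime2 //.
Qed.

Lemma Dl_uniq ps : uniq ps -> all prime ps -> uniq (Dl ps).
Proof.
elim: ps => [|p ps IH] //= /andP[pps ups] /andP[pp aps].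
rewrite cat_uniq IH //= map_inj_in_uniq ?IH //; last first.
  by move=> x y _ _ /eqP; rewrite eqn_pmul2l ?prime_gt0 // => /eqP.
rewrite andbT; apply/hasPn => z /mapP[y yD ->].
apply/negP => /(@Dl_ndvd ps p _ pp pps aps); by rewrite dvdn_mulr.
Qed.

Lemma Dl_le ps x : all prime ps -> x \in Dl ps -> (x <= \prod_(q <- ps) q)%N.
Proof.
elim: ps x => [|p ps IH] x /=; first by rewrite mem_seq1 big_nil => _ /eqP ->.
move=> /andP[pp aps]; rewrite big_cons mem_cat => /orP[xD|/mapP[y yD ->]].
  by apply: (leq_trans (IH _ aps xD)); rewrite leq_pmull // prime_gt0.
by rewrite leq_mul2l IH // orbT.
Qed.

Lemma Dl_contains ps d : all prime ps -> (0 < d)%N -> moebius d != 0 ->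
  (forall q, prime q -> (q %| d)%N -> q \in ps) -> d \in Dl ps.
Proof.
elim: ps d => [|p ps IH] d /=.
  move=> _ d0 _ H; rewrite mem_seq1; apply/negPn/negP => d1.
  have d1' : (1 < d)%N by rewrite ltn_neqAle eq_sym d1 d0.
  by have := H _ (pdiv_prime d1') (pdiv_dvd d); rewrite in_nil.
move=> /andP[pp aps] d0 md H; rewrite mem_cat.
have [pd|npd] := boolP (p %| d)%N.
  apply/orP; right.
  have de : d = (p * (d %/ p))%N by rewrite mulnC divnK.
  have e0 : (0 < d %/ p)%N by rewrite divn_gt0 ?prime_gt0 // dvdn_leq.
  have npe : ~~ (p %| d %/ p)%N.
    apply/negP => pe; move: md; rewrite (@moeb_sq p d pp) ?eqxx //.
    by rewrite de dvdn_pmul2l ?prime_gt0.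
  apply/mapP; exists (d %/ p)%N => //; apply: IH => //.
    by move: md; rewrite {1}de moebM // oppr_eq0.
  move=> q qp qe.
  have := H q qp (dvdn_trans qe (@dvdn_div p d pd : (d %/ p %| d)%N)); rewrite in_cons.
  case/orP => // /eqP qp'; subst q; by rewrite qe in npe.
apply/orP; left; apply: IH => // q qp qd.
have := H q qp qd; rewrite in_cons; case/orP => // /eqP qp'.
subst q; by rewrite qd in npd.
Qed.

From mathcomp Require Import ring lra.

Section Euler.
Variable R : realType.
Variable l : nat.

Definition bb (x y : nat) : R :=
  if coprime x y then (moebius x * moebius y)%:~R / ((x * y)%:R ^+ l) else 0.

Definition Esum ps := \sum_(x <- Dl ps) \sum_(y <- Dl ps) bb x y.

Lemma bb_pl p x y : prime p -> ~~ (p %| x)%N -> ~~ (p %| y)%N -> (0 < x)%N ->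
  (0 < y)%N -> bb (p * x)%N y = - bb x y / (p%:R ^+ l).
Proof.
move=> pp px py x0 y0; rewrite /bb coprimeMl prime_coprime // py /=.
case: ifP => _; last by rewrite oppr0 mul0r.
rewrite moebM // mulNr rmorphN /= !natrM !exprMn.
have c0 : (p%:R : R) ^+ l != 0 by rewrite expf_neq0 // pnatr_eq0 -lt0n prime_gt0.
rewrite mulNr invfM; field.
by rewrite c0 !expf_neq0 // pnatr_eq0 -lt0n.
Qed.

Lemma bb_sym x y : bb x y = bb y x.
Proof. by rewrite /bb coprime_sym (mulrC (moebius x)) (mulnC x). Qed.

Lemma bb_pp p x y : prime p -> bb (p * x)%N (p * y)%N = 0.
Proof.
move=> pp; rewrite /bb coprimeMl coprimeMr (prime_coprime p pp) dvdnn.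
by [].
Qed.

Lemma Esum_cons p ps : prime p -> p \notin ps -> all prime ps ->
  Esum (p :: ps) = (1 - 2 / p%:R ^+ l) * Esum ps.
Proof.
move=> pp pps aps; rewrite /Esum Dl_cons big_cat /= big_map.
set D := Dl ps; set c := (p%:R : R) ^+ l.
have nd : forall x, x \in D -> ~~ (p %| x)%N by move=> x; apply: Dl_ndvd.
have ps0 : forall x, x \in D -> (0 < x)%N by move=> x; apply: Dl_pos.
have eA : {in D, forall x,
    \sum_(y <- D ++ map (muln p) D) bb x y = \sum_(y <- D) bb x y - (\sum_(y <- D) bb x y) / c}.
  move=> x xD; rewrite big_cat big_map /=; congr (_ + _).
  rewrite mulr_suml -sumrN; apply: eq_big_seq => y yD.
  by rewrite bb_sym bb_pl ?nd ?ps0 // bb_sym mulNr.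
have eB : {in D, forall x,
    \sum_(y <- D ++ map (muln p) D) bb (p * x) y = - (\sum_(y <- D) bb x y) / c}.
  move=> x xD; rewrite big_cat big_map /=.
  rewrite [X in _ + X]big1 ?addr0; last by move=> y _; exact: bb_pp.
  rewrite mulNr mulr_suml -sumrN; apply: eq_big_seq => y yD.
  by rewrite bb_pl ?nd ?ps0 // mulNr.
rewrite (eq_big_seq _ eA) (eq_big_seq _ eB) sumrB -!mulr_suml sumrN.
rewrite /c; ring.
Qed.

Lemma Esum_prod ps : uniq ps -> all prime ps ->
  Esum ps = \prod_(p <- ps) (1 - 2 / p%:R ^+ l).
Proof.
elim: ps => [|p ps IH] /=.
  move=> _ _; rewrite big_nil /Esum /= !big_seq1 /bb coprime1n moeb1 /=. by rewrite !mulr1 expr1n invr1 mulr1.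
move=> /andP[pps ups] /andP[pp aps].
by rewrite Esum_cons // IH // big_cons.
Qed.
End Euler.

Section Bounds.
Variable R : realType.

Definition uu (x : nat) : R := 1 / (x%:R ^+ 2).

Lemma uu_ge0 x : 0 <= uu x.
Proof. by rewrite /uu divr_ge0 // exprn_ge0. Qed.

Lemma tail2 K j : (1 <= K)%N ->
  \sum_(K <= x < K + j) uu x <= 2 / K%:R - 2 / (K + j)%:R.
Proof.
move=> K1; elim: j => [|j IH]; first by rewrite addn0 big_geq // subrr.
rewrite addnS big_nat_recr ?leq_addr //=.
apply: (le_trans (lerD IH (lexx _))).
set k := (K + j)%N.
have k1 : (1 <= k)%N by rewrite (leq_trans K1) ?leq_addr.
have k0 : (0 : R) < k%:R by rewrite ltr0n.
suff H : uu k <= 2 / k%:R - 2 / k.+1%:R.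
  by apply: le_trans (lerD (lexx _) H) _; rewrite addrA subrK.
rewrite /uu; have -> : (k.+1%:R : R) = k%:R + 1 by rewrite -natr1.
have -> : 2 / k%:R - 2 / (k%:R + 1) = 2 / (k%:R * (k%:R + 1)) :> R.
  by field; rewrite ?gt_eqF // ?addr_gt0.
rewrite ler_pdivrMr ?exprn_gt0 // mulrAC ler_pdivlMr ?mulr_gt0 ?addr_gt0 //.
have k1' : (1:R) <= k%:R by rewrite ler1n.
nra.
Qed.

Lemma tail2' K K' : (1 <= K)%N -> \sum_(K <= x < K') uu x <= 2 / K%:R.
Proof.
move=> K1; have [KK'|K'K] := leqP K K'.
  rewrite -(subnKC KK'); apply: (le_trans (@tail2 K (K' - K) K1)).
  rewrite lerBlDr lerDl; exact: divr_ge0.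
rewrite big_geq; [exact: divr_ge0 | exact: ltnW].
Qed.

Lemma sumu_le M : \sum_(1 <= x < M) uu x <= 2.
Proof. by apply: (le_trans (@tail2' 1 M isT)); rewrite divr1. Qed.

Lemma bound2 (h : nat -> nat -> R) a b c d :
  (forall x y, (1 <= x)%N -> (1 <= y)%N -> `|h x y| <= uu x * uu y) ->
  (1 <= a)%N -> (1 <= c)%N ->
  `|\sum_(a <= x < b) \sum_(c <= y < d) h x y| <=
    (\sum_(a <= x < b) uu x) * (\sum_(c <= y < d) uu y).
Proof.
move=> hb a1 c1; apply: (le_trans (ler_norm_sum _ _ _)).
rewrite mulr_suml; apply: ler_sum_nat => x /andP[ax _].
apply: (le_trans (ler_norm_sum _ _ _)).
rewrite mulr_sumr; apply: ler_sum_nat => y /andP[cy _].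
by apply: hb; [apply: leq_trans ax | apply: leq_trans cy].
Qed.
Lemma Gsq (h : nat -> nat -> R) N M :
  (forall x y, (1 <= x)%N -> (1 <= y)%N -> `|h x y| <= uu x * uu y) ->
  (1 <= N)%N -> (N <= M)%N ->
  `|\sum_(1 <= x < M) \sum_(1 <= y < M) h x y
    - \sum_(1 <= x < N) \sum_(1 <= y < N) h x y| <= 8 / N%:R.
Proof.
move=> hb N1 NM.
rewrite (big_cat_nat N1 NM) /=.
have e : forall x, \sum_(1 <= y < M) h x y =
    \sum_(1 <= y < N) h x y + \sum_(N <= y < M) h x y.
  by move=> x; rewrite (big_cat_nat N1 NM).
under eq_bigr do rewrite e.
rewrite big_split /=.
have H3 : forall a b c : R, a + b + c - a = b + c by move=> *; ring.
rewrite H3.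
apply: (le_trans (ler_normD _ _)).
have b1 := @bound2 h 1 N N M hb isT N1.
have b2 := @bound2 h N M 1 M hb N1 isT.
have s1 := sumu_le N; have s2 := sumu_le M; have t := @tail2' N M N1.
have g1 : 0 <= \sum_(1 <= x < N) uu x by rewrite sumr_ge0 // => i _; exact: uu_ge0.
have g2 : 0 <= \sum_(N <= x < M) uu x by rewrite sumr_ge0 // => i _; exact: uu_ge0.
have N0 : (0 : R) < N%:R by rewrite ltr0n.
have -> : 8 / N%:R = 2 * (2 / N%:R) + 2 / N%:R * 2 :> R by field; rewrite gt_eqF.
apply: lerD.
  by apply: (le_trans b1); apply: ler_pM.
apply: (le_trans b2); apply: ler_pM => //.
by rewrite sumr_ge0 // => i _; exact: uu_ge0.
Qed.
End Bounds.

Section Conv.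
Variable R : realType.
Variable l : nat.
Hypothesis l2 : (2 <= l)%N.

Definition TT (K : nat) : R := \sum_(1 <= x < K) \sum_(1 <= y < K) bb R l x y.

Lemma frac_bound k k0 x y : (1 <= x)%N -> (1 <= y)%N -> (k0 <= k)%N ->
  `|(moebius x * moebius y)%:~R / ((x * y)%:R ^+ k) : R| <= 1 / ((x * y)%:R ^+ k0).
Proof.
move=> x1 y1 kk.
have xy : (1 : R) <= (x * y)%:R by rewrite ler1n muln_gt0 x1.
have D0 : forall j, (0 : R) < (x * y)%:R ^+ j.
  by move=> j; rewrite exprn_gt0 // (lt_le_trans ltr01).
rewrite normf_div (ger0_norm (ltW (D0 _))).
have hn : `|(moebius x * moebius y)%:~R : R| <= 1.
  rewrite intrM normrM; have := ler_pM (normr_ge0 _) (normr_ge0 _) (moeb_norm R x) (moeb_norm R y); by rewrite mulr1.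
have hi : 0 <= ((x * y)%:R ^+ k : R)^-1 by rewrite invr_ge0 ltW.
apply: le_trans (ler_wpM2r hi hn) _.
rewrite !mul1r lef_pV2 ?posrE ?D0 //.
exact: ler_weXn2l.
Qed.

Lemma bb_bound x y : (1 <= x)%N -> (1 <= y)%N -> `|bb R l x y| <= uu R x * uu R y.
Proof.
move=> x1 y1; rewrite /bb; case: ifP => _; last first.
  by rewrite normr0 mulr_ge0 // uu_ge0.
apply: le_trans (@frac_bound l 2 x y x1 y1 l2) _.
by rewrite /uu natrM exprMn !mul1r invfM.
Qed.
Lemma TT_diff N M : (1 <= N)%N -> (N <= M)%N -> `|TT M - TT N| <= 8 / N%:R.
Proof. by move=> N1 NM; apply: Gsq => // x y; exact: bb_bound. Qed.

Lemma L_eq (F : nat -> R) (D : seq nat) M : uniq D ->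
  (forall x, x \in D -> (1 <= x < M)%N) ->
  \sum_(x <- D) F x = \sum_(1 <= x < M) (if x \in D then F x else 0).
Proof.
move=> uD DM; rewrite -big_mkcond /= -[RHS]big_filter; apply: perm_big.
apply: uniq_perm => //; first by rewrite filter_uniq // iota_uniq.
move=> z; rewrite mem_filter mem_index_iota.
by case zD: (z \in D) => /=; rewrite ?DM.
Qed.

Lemma bb_moeb0 x y : moebius x = 0 -> bb R l x y = 0.
Proof. by move=> m0; rewrite /bb m0 mul0r mul0r if_same. Qed.

Lemma euler_link N : (1 <= N)%N -> `|euler_partial R l N - TT N| <= 8 / N%:R.
Proof.
move=> N1.
set ps := [seq p <- iota 0 N | prime p].
have ups : uniq ps by rewrite filter_uniq // iota_uniq.
have aps : all prime ps by apply/allP => p; rewrite mem_filter => /andP[].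
have E1 : euler_partial R l N = Esum R l ps.
  rewrite Esum_prod // /euler_partial big_filter.
  have -> : iota 0 N = index_iota 0 N by rewrite /index_iota subn0.
  by rewrite big_mkord.
set D := Dl ps.
set M := maxn N (\prod_(q <- ps) q).+1.
have NM : (N <= M)%N by rewrite leq_maxl.
have Dr : forall x, x \in D -> (1 <= x < M)%N.
  move=> x xD; rewrite (@Dl_pos ps x aps xD) /= leq_max; apply/orP; right.
  by rewrite ltnS (@Dl_le ps x aps xD).
have uD : uniq D by exact: Dl_uniq.
pose h x y := if (x \in D) && (y \in D) then bb R l x y else 0.
have E2 : Esum R l ps = \sum_(1 <= x < M) \sum_(1 <= y < M) h x y.
  rewrite /Esum (@L_eq _ D M uD Dr); apply: eq_bigr => x _.
  rewrite (@L_eq _ D M uD Dr) /h; case: (x \in D) => //=.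
  by rewrite big1.
have mz : forall z, (1 <= z)%N -> (z < N)%N -> z \notin D -> moebius z = 0.
  move=> z z1 zN zD; apply/eqP; apply: contraNT zD => mz.
  apply: Dl_contains => // q qp qz.
  rewrite mem_filter qp mem_iota /= add0n.
  exact: leq_ltn_trans (dvdn_leq z1 qz) zN.
have E3 : TT N = \sum_(1 <= x < N) \sum_(1 <= y < N) h x y.
  apply: eq_big_nat => x /andP[x1 xN]; apply: eq_big_nat => y /andP[y1 yN].
  rewrite /h; case xD: (x \in D); case yD: (y \in D) => //=.
  - by rewrite bb_sym bb_moeb0 // mz // yD.
  - by rewrite bb_moeb0 // mz // xD.
  - by rewrite bb_moeb0 // mz // xD.
rewrite E1 E2 E3; apply: Gsq => // x y x1 y1; rewrite /h.
case: ifP => _; first exact: bb_bound.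
by rewrite normr0 mulr_ge0 // uu_ge0.
Qed.
Lemma exP : exists P : R,
  ((fun N : nat => euler_partial R l N) @ \oo --> P) /\
  (forall K, (1 <= K)%N -> `|TT K - P| <= 8 / K%:R).
Proof.
have cT : cvg (TT @ \oo).
  apply/cauchy_cvgP; apply: cauchy_exP => e e0.
  pose K0 := (Num.truncn (8 / e)).+1.
  have K01 : (1 <= K0)%N by [].
  have K0e : 8 / K0%:R < e.
    rewrite ltr_pdivrMr ?ltr0n // mulrC -ltr_pdivrMr //.
    exact: truncnS_gt.
  exists (TT K0); exists K0 => // K /= KK.
  rewrite -ball_normE /ball_ /= distrC.
  exact: le_lt_trans (@TT_diff K0 K K01 KK) K0e.
set P := lim (TT @ \oo).
have bnd : forall K, (1 <= K)%N -> `|TT K - P| <= 8 / K%:R.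
  move=> K K1; rewrite distrC ler_distl; apply/andP; split.
    apply: limr_ge => //; exists K => // K' /= KK'.
    have := @TT_diff K K' K1 KK'; rewrite ler_distl => /andP[+ _].
    by [].
  apply: limr_le => //; exists K => // K' /= KK'.
  have := @TT_diff K K' K1 KK'; rewrite ler_distl => /andP[_ +].
  by [].
exists P; split => //.
apply/cvgrPdist_le => e e0.
pose K0 := (Num.truncn (16 / e)).+1.
have K0e : 16 / K0%:R < e.
  rewrite ltr_pdivrMr ?ltr0n // mulrC -ltr_pdivrMr //.
  exact: truncnS_gt.
exists K0 => // N /= KN.
have N1 : (1 <= N)%N by apply: leq_trans KN.
have N0 : (0 : R) < N%:R by rewrite ltr0n.
apply: ltW; apply: le_lt_trans K0e.
have -> : P - euler_partial R l N = (P - TT N) + (TT N - euler_partial R l N) by ring.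
apply: (le_trans (ler_normD _ _)).
have h1 := bnd N N1; have h2 := @euler_link N N1.
rewrite distrC in h1; rewrite distrC in h2.
have : (16 : R) / N%:R <= 16 / K0%:R.
  by rewrite ler_pM2l // lef_pV2 ?posrE ?ltr0n // ler_nat.
have -> : 16 / N%:R = 8 / N%:R + 8 / N%:R :> R by field; rewrite gt_eqF.
move=> H; apply: le_trans H; exact: lerD.
Qed.
End Conv.

Section Cnt.
Local Open Scope nat_scope.
Variables m r : nat.
Hypothesis m0 : 0 < m.
Hypothesis rm : r < m.
Let P := fun i => i %% m == r.

Lemma win A : count P (iota A m) = 1.
Proof.
elim: A => [|A IH].
  rewrite (@eq_in_count _ _ (pred1 r)); last first.
    by move=> i; rewrite mem_iota add0n /P => /andP[_ im]; rewrite modn_small.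
  by rewrite count_uniq_mem ?iota_uniq // mem_iota add0n rm.
have e1 : iota A m.+1 = A :: iota A.+1 m by [].
have e2 : iota A m.+1 = iota A m ++ [:: A + m] by rewrite -addn1 iotaD.
have := congr1 (count P) e1; rewrite e2 count_cat /= IH.
rewrite /P modnDr addn0 addnC => /eqP; rewrite eqn_add2l => /eqP <-.
by [].
Qed.

Lemma blocks A k : count P (iota A (k * m)) = k.
Proof.
elim: k A => [|k IH] A; first by [].
by rewrite mulSn iotaD count_cat win IH.
Qed.

Lemma part A s : s <= m -> count P (iota A s) <= 1.
Proof.
move=> sm; rewrite -(win A) -(subnKC sm) iotaD count_cat leq_addr.
by [].
Qed.
End Cnt.

Section Main.
Variable R : realType.
Variable l : nat.

Definition aa (x y : nat) : R :=
  (moebius x * moebius y)%:~R / ((x * y)%:R ^+ (l - 1)).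

Definition cnt (n x y : nat) : nat :=
  \sum_(1 <= i < n.+1) [&& (x %| i)%N, (y %| i.+1)%N, coprime x y & (x * y <= i)%N].

Lemma Wid (F : nat -> R) (P : pred nat) m k k' : (m <= k)%N -> (m <= k')%N ->
  (forall x, (minn k k' <= x)%N -> P x = false) ->
  \sum_(m <= x < k | P x) F x = \sum_(m <= x < k' | P x) F x.
Proof.
wlog kk : k k' / (k <= k')%N.
  move=> H mk mk' HP; have [kk|kk] := leqP k k'; first exact: H.
  by apply/esym/H => // [|x]; [exact: ltnW | rewrite minnC; exact: HP].
move=> mk mk' HP; rewrite (big_cat_nat mk kk) /=.
rewrite [X in _ + X]big_nat_cond [X in _ + X]big1 ?addr0 // => x /andP[/andP[kx _]].
by rewrite HP // (minn_idPl kk).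
Qed.

Lemma S29E n : S29 R l n =
  \sum_(1 <= x < n.+1) \sum_(1 <= y < n.+1) aa x y * (cnt n x y)%:R.
Proof.
rewrite /S29.
have e1 : forall i, (1 <= i < n.+1)%N ->
  \sum_(1 <= d1 < i.+1 | (d1 %| i)%N)
      \sum_(1 <= d2 < i.+2 | [&& (d2 %| i.+1)%N, coprime d1 d2 & (d1 * d2 <= i)%N])
        aa d1 d2 =
  \sum_(1 <= d1 < n.+1) \sum_(1 <= d2 < n.+1)
     (if [&& (d1 %| i)%N, (d2 %| i.+1)%N, coprime d1 d2 & (d1 * d2 <= i)%N]
      then aa d1 d2 else 0).
  move=> i /andP[i1 iN].
  rewrite (@Wid _ _ 1 i.+1 n.+1) //; last first.
    move=> x; rewrite (minn_idPl iN) => ix; apply/negP => /(dvdn_leq i1).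
    by rewrite leqNgt ix.
  rewrite big_mkcond /=; apply: eq_big_nat => d1 /andP[d11 _].
  case: (d1 %| i)%N; last by rewrite big1.
  rewrite (@Wid _ _ 1 i.+2 n.+1) //; last first.
    move=> x mx; apply/negP => /and3P[_ _]; rewrite leqNgt; apply/negP/negPn.
    apply: (leq_trans _ (leq_pmull _ d11)).
    by apply: leq_trans mx; rewrite leq_min ltnS leqnSn.
  by rewrite big_mkcond.
rewrite (eq_big_nat _ _ e1) exchange_big; apply: eq_big_nat => x _.
rewrite exchange_big; apply: eq_big_nat => y _.
rewrite /cnt natr_sum mulr_sumr; apply: eq_bigr => i _.
by case: ifP; rewrite ?mulr1 ?mulr0.
Qed.
Lemma sumb_count (s : seq nat) (P : pred nat) :
  (\sum_(i <- s) (P i : nat))%N = count P s.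
Proof. by elim: s => [|a s IH]; rewrite ?big_nil ?big_cons ?IH. Qed.

Lemma chin x y i : coprime x y -> (0 < y)%N ->
  ((x %| i) && (y %| i.+1))%N =
  (i %% (x * y) == (chinese x y 0 y.-1) %% (x * y))%N.
Proof.
move=> co y0.
have := chinese_remainder co i (chinese x y 0 y.-1); rewrite /= => ->.
rewrite (chinese_modl co) (chinese_modr co) mod0n.
congr (_ && _).
rewrite -(eqn_modDr 1) !addn1 prednK // modnn.
by [].
Qed.

Lemma cnt_nat n x y : coprime x y -> (0 < x)%N -> (0 < y)%N ->
  exists q c, [/\ (c <= 1)%N, (cnt n x y = q + c)%N &
     ((n < x * y)%N /\ q = 0%N /\ c = 0%N \/
      exists s, (s < x * y)%N /\ (n.+1 = x * y + (q * (x * y) + s))%N)].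
Proof.
move=> co x0 y0.
set m := (x * y)%N; set r := (chinese x y 0 y.-1 %% m)%N.
have m0 : (0 < m)%N by rewrite muln_gt0 x0.
have rm : (r < m)%N by rewrite ltn_mod.
have e : cnt n x y = count (fun i => (i %% m == r) && (m <= i))%N (index_iota 1 n.+1).
  rewrite /cnt -sumb_count; apply: eq_bigr => i _.
  by rewrite co /= andbA chin.
have [nm|mn] := ltnP n m.
  exists 0%N, 0%N; split => //; last by left.
  rewrite e; apply/eqP; rewrite -leqn0 leqNgt -has_count; apply/hasPn => i.
  rewrite mem_index_iota => /andP[_ iN]; rewrite negb_and; apply/orP; right.
  by rewrite -ltnNge (leq_trans iN).
set L := (n.+1 - m)%N.
have hL : (n.+1 = m + L)%N by rewrite subnKC // ltnW.
set q := (L %/ m)%N; set s := (L %% m)%N.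
have hq : (L = q * m + s)%N by exact: divn_eq.
have sm : (s < m)%N by rewrite ltn_mod.
have e2 : index_iota 1 n.+1 = iota 1 m.-1 ++ (iota m (q * m) ++ iota (m + q * m) s).
  have hn : n = (m.-1 + (q * m + s))%N.
    by rewrite -hq; move: hL; rewrite -(prednK m0) addSn => -[].
  by rewrite /index_iota subn1 /= hn iotaD iotaD add1n prednK.
exists q, (count (fun i => i %% m == r)%N (iota (m + q * m) s)); split.
- by apply: part => //; exact: ltnW.
- rewrite e e2 !count_cat.
  rewrite (@eq_in_count _ _ pred0 (iota 1 m.-1)); last first.
    move=> i; rewrite mem_iota => /andP[_ im].
    rewrite /= (_ : (m <= i)%N = false) ?andbF //; apply/negbTE; rewrite -ltnNge.
    by rewrite add1n prednK in im.
  rewrite count_pred0 add0n.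
  rewrite (@eq_in_count _ _ (fun i => i %% m == r)%N (iota m (q * m))); last first.
    by move=> i; rewrite mem_iota => /andP[mi _]; rewrite mi andbT.
  rewrite (@eq_in_count _ _ (fun i => i %% m == r)%N (iota (m + q * m) s)); last first.
    move=> i; rewrite mem_iota => /andP[mi _]; rewrite (leq_trans _ mi) ?andbT //.
    exact: leq_addr.
  by rewrite blocks.
- right; exists s; split => //.
  by rewrite hL hq.
Qed.
Lemma divbound (a b M : R) : 0 < M -> `|a * M - b| <= 2 * M -> `|a - b / M| <= 2.
Proof.
move=> M0 h; have -> : a - b / M = (a * M - b) / M by field; rewrite gt_eqF.
by rewrite normf_div (gtr0_norm M0) ler_pdivrMr.
Qed.

Lemma cnt_bound n x y : coprime x y -> (0 < x)%N -> (0 < y)%N ->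
  `|(cnt n x y)%:R - n%:R / (x * y)%:R| <= 2 :> R.
Proof.
move=> co x0 y0.
have [q [c [c1 ce H]]] := @cnt_nat n x y co x0 y0.
have M1 : (1 : R) <= (x * y)%:R by rewrite ler1n muln_gt0 x0.
have M0 : (0 : R) < (x * y)%:R by apply: lt_le_trans M1.
apply: divbound => //; rewrite ce natrD.
have C0 : (0 : R) <= c%:R by [].
have C1 : (c%:R : R) <= 1 by rewrite -[1]/(1%:R) ler_nat.
case: H => [[nm [q0 c0]]|[s' [sm hn]]].
  rewrite q0 c0 /= addr0 mul0r sub0r normrN ger0_norm //.
  have : (n%:R : R) <= (x * y)%:R by rewrite ler_nat ltnW.
  lra.
have hn' : (n%:R : R) + 1 = (x * y)%:R + (q%:R * (x * y)%:R + s'%:R).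
  by rewrite natr1 hn !natrD (natrM R q).
have S0 : (0 : R) <= s'%:R by [].
have S1 : (s'%:R : R) + 1 <= (x * y)%:R by rewrite natr1 ler_nat.
rewrite Num.Theory.ler_norml; apply/andP; split; nra.
Qed.
Lemma cnt0 n x y : ~~ coprime x y -> cnt n x y = 0%N.
Proof.
move=> nco; rewrite /cnt big1 // => i _.
by rewrite (negbTE nco) /= !andbF.
Qed.

Lemma term_bound n x y : (2 <= l)%N -> (1 <= x)%N -> (1 <= y)%N ->
  `|aa x y * (cnt n x y)%:R - n%:R * bb R l x y| <= 2 * (1 / x%:R * (1 / y%:R)).
Proof.
move=> l2 x1 y1.
have hxy : (0 : R) < (x * y)%:R by rewrite ltr0n muln_gt0 x1.
have b2 : (0 : R) <= 2 * (1 / x%:R * (1 / y%:R)).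
  by rewrite mulr_ge0 // mulr_ge0 // divr_ge0.
case co: (coprime x y); last first.
  by rewrite cnt0 ?co // /bb co mulr0n !mulr0 subr0 normr0.
have -> : bb R l x y = aa x y / (x * y)%:R.
  rewrite /bb /aa co -mulrA -invfM; congr (_ / _).
  by rewrite -exprSr subn1 prednK // (leq_trans _ l2).
have -> : aa x y * (cnt n x y)%:R - n%:R * (aa x y / (x * y)%:R) =
          aa x y * ((cnt n x y)%:R - n%:R / (x * y)%:R) by ring.
rewrite normrM.
have ha : `|aa x y| <= 1 / x%:R * (1 / y%:R).
  apply: le_trans (@frac_bound R (l - 1) 1 x y x1 y1 _) _.
    by rewrite subn_gt0.
  by rewrite expr1 natrM mulf_div mulr1.
rewrite mulrC; apply: ler_pM => //; first exact: cnt_bound.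
Qed.
End Main.

Section Fin.
Variable R : realType.

Definition HH (n : nat) : R := \sum_(1 <= x < n.+1) 1 / x%:R.

Lemma HH_ln n : (1 <= n)%N -> HH n <= 1 + ln (n%:R).
Proof.
elim: n => [//|n IH] _.
have [->|n1] := posnP n.
  by rewrite /HH big_nat1 ln1 addr0 divr1.
have n0 : (0 : R) < n%:R by rewrite ltr0n.
rewrite /HH big_nat_recr //= -/(HH n).
have IH' := IH n1.
suff : 1 / n.+1%:R <= ln n.+1%:R - ln n%:R :> R.
  by move: IH'; generalize (HH n) (ln (n%:R : R)) (ln (n.+1%:R : R)) (1 / n.+1%:R : R) => *; lra.
have n10 : (0 : R) < n.+1%:R by rewrite ltr0n.
have h := @le_ln1Dx R (- (1 / n.+1%:R)).
have e : 1 + - (1 / n.+1%:R) = n%:R / n.+1%:R :> R.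
  by rewrite -natr1; field; rewrite natr1 gt_eqF.
rewrite e ln_div ?posrE // in h.
have hh : ln (n%:R : R) - ln n.+1%:R <= - (1 / n.+1%:R).
  apply: h; rewrite ltrN2 ltr_pdivrMr // mul1r ltr1n //.
by rewrite -lerN2 opprB.
Qed.
Lemma ln_pow n (d : R) : 0 < d -> (1 <= n)%N -> ln (n%:R : R) <= n%:R `^ d / d.
Proof.
move=> d0 n1; have n0 : (0 : R) < n%:R by rewrite ltr0n.
have := ln_sublinear (powR_gt0 d n0); rewrite ln_powR => h.
by rewrite ler_pdivlMr // mulrC; exact: ltW.
Qed.

Lemma pow_ge1 n (d : R) : 0 <= d -> (1 <= n)%N -> 1 <= n%:R `^ d.
Proof.
move=> d0 n1; have n1' : (1 : R) <= n%:R by rewrite ler1n.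
by have := ler_powR n1' d0; rewrite powRr0.
Qed.

Lemma HH_pow n (d : R) : 0 < d -> (1 <= n)%N -> HH n <= (1 + 1 / d) * n%:R `^ d.
Proof.
move=> d0 n1; apply: le_trans (@HH_ln n n1) _.
have h1 := @ln_pow n d d0 n1; have h2 := @pow_ge1 n d (ltW d0) n1.
rewrite mulrDl mul1r mulrC mulrA mulr1; apply: lerD => //.
Qed.

Lemma Sdiff l n : (2 <= l)%N ->
  `|S29 R l n - n%:R * TT R l n.+1| <= 2 * HH n ^+ 2.
Proof.
move=> l2; rewrite S29E /TT mulr_sumr.
under [X in _ - X]eq_bigr do rewrite mulr_sumr.
rewrite -sumrB; under eq_bigr do rewrite -sumrB.
have -> : 2 * HH n ^+ 2 = \sum_(1 <= x < n.+1) \sum_(1 <= y < n.+1) 2 * (1 / x%:R * (1 / y%:R)).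
  rewrite expr2 /HH mulr_suml mulr_sumr; apply: eq_bigr => x _.
  rewrite mulr_sumr mulr_sumr; apply: eq_bigr => y _; by rewrite mulrA.
apply: (le_trans (ler_norm_sum _ _ _)); apply: ler_sum_nat => x /andP[x1 _].
apply: (le_trans (ler_norm_sum _ _ _)); apply: ler_sum_nat => y /andP[y1 _].
exact: term_bound.
Qed.
End Fin.

Theorem lemma2p9 (R : realType) (l : nat) (eps : R) :
  (2 <= l)%N -> 0 < eps ->
  exists P : R,
    ((fun N : nat => euler_partial R l N) @ \oo --> P) /\
    exists C : R, exists N0 : nat, forall n : nat, (N0 <= n)%N ->
      `| S29 R l n - n%:R * P | <= C * (n%:R `^ eps).
Proof.
move=> l2 e0.
have [P [cP bP]] := @exP R l l2.
exists P; split => //.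
set d := eps / 2.
have d0 : 0 < d by rewrite divr_gt0.
exists (2 * (1 + 1 / d) ^+ 2 + 8), 1%N => n n1.
have n0 : (0 : R) < n%:R by rewrite ltr0n.
have -> : S29 R l n - n%:R * P = (S29 R l n - n%:R * TT R l n.+1) + n%:R * (TT R l n.+1 - P) by ring.
apply: (le_trans (ler_normD _ _)).
have h1 := @Sdiff R l n l2.
have h2 : `|n%:R * (TT R l n.+1 - P)| <= 8.
  rewrite normrM (ger0_norm (ltW n0)).
  apply: le_trans (ler_wpM2l (ltW n0) (bP n.+1 isT)) _.
  rewrite mulrA ler_pdivrMr ?ltr0n // mulrC ler_pM2l // ler_nat.
  by [].
have h3 := @HH_pow R n d d0 n1.
have hg := @pow_ge1 R n eps (ltW e0) n1.
have hH : 0 <= HH R n by rewrite sumr_ge0 // => i _; rewrite divr_ge0.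
have hpe : n%:R `^ eps = n%:R `^ d * n%:R `^ d.
  by rewrite -powRD ?gt_eqF ?implybT // /d -splitr.
have hd : 0 <= n%:R `^ d := powR_ge0 _ _.
have h4 : HH R n ^+ 2 <= (1 + 1 / d) ^+ 2 * n%:R `^ eps.
  rewrite hpe expr2; apply: le_trans (ler_pM hH hH h3 h3) _.
  rewrite le_eqVlt; apply/orP; left; apply/eqP; ring.
rewrite mulrDl; apply: lerD.
  apply: le_trans h1 _; rewrite -mulrA; apply: ler_wpM2l => //.
apply: le_trans h2 _; rewrite -{1}(mulr1 8); apply: ler_wpM2l => //.
Qed.
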